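(* Let $I_1,I_2>0$ with $I_1\neq I_2$, $\alpha_i=1+I_i$, $\beta_i=1-I_i$, and $M>0$. Consider the system on $\mathbb{R}^2$ $$\dot\theta_1=\alpha_1+\beta_1\cos\theta_1+(1-\cos\theta_1)u,\qquad \dot\theta_2=\alpha_2+\beta_2\cos\theta_2+(1-\cos\theta_2)u,$$ with measurable controls satisfying $|u(t)|\le M$, and the time-optimal control problem of steering $(\theta_1,\theta_2)(0)=(0,0)$ to $(\theta_1,\theta_2)(T)=(2m_1\pi,2m_2\pi)$, $m_1,m_2$ positive integers, in minimum time $T$. Then for any extremal of this problem given by Pontryagin's maximum principle (Hamiltonian $H=\lambda_0+\langle\lambda, f+Zu\rangle$ with $f=(\alpha_1+\beta_1\cos\theta_1,\alpha_2+\beta_2\cos\theta_2)'$, $Z=(1-\cos\theta_1,1-\cos\theta_2)'$), the switching function $\phi(t)=\langle\lambda(t),Z(\Theta(t))\rangle$ does not vanish identically on any time interval of positive length. Consequently a minimum-time control is bang-bang: $u(t)=M$ when $\phi(t)<0$ and $u(t)=-M$ when $\phi(t)>0$, so that $u(t)\in\{-M,M\}$ for almost every $t$.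
   Context: Here $\lambda(t)\in\mathbb{R}^2$ is the costate of the maximum principle (nonzero, satisfying the adjoint equation $\dot\lambda=-\partial H/\partial\Theta$), and the optimal control minimizes the Hamiltonian pointwise over $|u|\le M$. *)

(* Defs.v *)
From Stdlib Require Import Reals Lra List.
Import ListNotations.
Open Scope R_scope.

(** Lebesgue-null subsets of R: coverable by countably many open intervals
    of arbitrarily small total length. *)
Definition negligible (N : R -> Prop) : Prop :=
  forall eps : R, 0 < eps ->
    exists a b : nat -> R,
      (forall n, a n <= b n) /\
      (forall x, N x -> exists n, a n < x < b n) /\
      (forall n, sum_f_R0 (fun k => b k - a k) n <= eps).

Definition ae_on (T : R) (P : R -> Prop) : Prop :=
  exists N : R -> Prop, negligible N /\
    forall t, 0 <= t <= T -> ~ N t -> P t.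

Fixpoint nonoverlap (l : list (R * R)) : Prop :=
  match l with
  | [] => True
  | p :: l' => Forall (fun q => snd p <= fst q) l' /\ nonoverlap l'
  end.

Definition total_length (l : list (R * R)) : R :=
  fold_right (fun p s => (snd p - fst p) + s) 0 l.

Definition total_variation_on (f : R -> R) (l : list (R * R)) : R :=
  fold_right (fun p s => Rabs (f (snd p) - f (fst p)) + s) 0 l.

Definition abs_cont_on (T : R) (f : R -> R) : Prop :=
  forall eps : R, 0 < eps -> exists delta : R, 0 < delta /\
    forall l : list (R * R),
      Forall (fun p => 0 <= fst p /\ fst p <= snd p /\ snd p <= T) l ->
      nonoverlap l ->
      total_length l < delta ->
      total_variation_on f l < eps.

Definition alpha (I : R) : R := 1 + I.
Definition beta (I : R) : R := 1 - I.

Definition f_i (I th : R) : R := alpha I + beta I * cos th.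
Definition Z_i (th : R) : R := 1 - cos th.

Definition Ham (I1 I2 lam0 l1 l2 th1 th2 v : R) : R :=
  lam0 + l1 * (f_i I1 th1 + Z_i th1 * v) + l2 * (f_i I2 th2 + Z_i th2 * v).

(** Partial derivative of H with respect to theta_i (written out):
    d/dth [ l * (alpha + beta cos th + (1 - cos th) v) ]
      = l * (- beta sin th + v sin th). *)
Definition dHam_dth (I l th v : R) : R := l * (- beta I * sin th + v * sin th).

Definition switching (l1 l2 th1 th2 : R) : R := l1 * Z_i th1 + l2 * Z_i th2.

(* Main.v *)
Require Import Defs.
From Stdlib Require Import Reals Lra Lia ZArith List Classical ClassicalEpsilon Cantor.
Open Scope R_scope.

Definition countable (C : R -> Prop) : Prop :=
  exists g : nat -> R, forall x, C x -> exists n, x = g n.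

Lemma geom_sum (eps : R) n :
  sum_f_R0 (fun k => eps / 2 ^ (S k)) n = eps - eps / 2 ^ (S n).
Proof.
  induction n as [|n IH].
  - simpl. field.
  - rewrite tech5, IH. change (2 ^ S (S n)) with (2 * 2 ^ (S n)).
    assert (0 < 2 ^ S n) by (apply pow_lt; lra). field. lra.
Qed.

Lemma countable_negligible C : countable C -> negligible C.
Proof.
  intros [g Hg] eps Heps.
  exists (fun n => g n - eps / 2 ^ (S (S n))), (fun n => g n + eps / 2 ^ (S (S n))).
  repeat split.
  - intros n. assert (0 < 2 ^ S (S n)) by (apply pow_lt; lra).
    assert (0 < eps / 2 ^ S (S n)) by (apply Rdiv_lt_0_compat; lra). lra.
  - intros x Cx. destruct (Hg x Cx) as [n ->]. exists n.
    assert (0 < 2 ^ S (S n)) by (apply pow_lt; lra).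
    assert (0 < eps / 2 ^ S (S n)) by (apply Rdiv_lt_0_compat; lra). lra.
  - intros n.
    rewrite (sum_eq _ (fun k => eps / 2 ^ (S k))).
    + rewrite geom_sum. assert (0 < 2 ^ S n) by (apply pow_lt; lra).
      assert (0 < eps / 2 ^ S n) by (apply Rdiv_lt_0_compat; lra). lra.
    + intros i _. change (2 ^ S (S i)) with (2 * 2 ^ (S i)).
      assert (0 < 2 ^ S i) by (apply pow_lt; lra). field. lra.
Qed.

Definition inter (A B : nat -> R) (n : nat) : R :=
  if Nat.even n then A (Nat.div2 n) else B (Nat.div2 n).

Lemma inter_even A B m : inter A B (2 * m) = A m.
Proof. unfold inter. rewrite Nat.even_mul, Nat.div2_double. reflexivity. Qed.
Lemma inter_odd A B m : inter A B (S (2 * m)) = B m.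
Proof.
  unfold inter. rewrite Nat.even_succ, Nat.odd_mul, Nat.div2_succ_double. reflexivity. Qed. Lemma dummy0 : True.
  exact I.
Qed.

Lemma countable_union C1 C2 : countable C1 -> countable C2 ->
  countable (fun x => C1 x \/ C2 x).
Proof.
  intros [g1 H1] [g2 H2]. exists (inter g1 g2).
  intros x [Cx|Cx].
  - destruct (H1 x Cx) as [n ->]. exists (2 * n)%nat. now rewrite inter_even.
  - destruct (H2 x Cx) as [n ->]. exists (S (2 * n))%nat. now rewrite inter_odd.
Qed.

Lemma sum_mono (c : nat -> R) n m : (forall k, 0 <= c k) -> (n <= m)%nat ->
  sum_f_R0 c n <= sum_f_R0 c m.
Proof.
  intros Hc Hnm. induction Hnm. lra. simpl. specialize (Hc (S m)). lra.
Qed.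

Lemma negligible_union N1 N2 : negligible N1 -> negligible N2 ->
  negligible (fun x => N1 x \/ N2 x).
Proof.
  intros H1 H2 eps Heps.
  destruct (H1 (eps/2)) as (a1 & b1 & Hab1 & Hc1 & Hs1); [lra|].
  destruct (H2 (eps/2)) as (a2 & b2 & Hab2 & Hc2 & Hs2); [lra|].
  exists (inter a1 a2), (inter b1 b2).
  assert (Hab : forall n, inter a1 a2 n <= inter b1 b2 n).
  { intros n. unfold inter. destruct (Nat.even n); auto. }
  repeat split; auto.
  - intros x [Nx|Nx].
    + destruct (Hc1 x Nx) as [n Hn]. exists (2 * n)%nat. now rewrite !inter_even.
    + destruct (Hc2 x Nx) as [n Hn]. exists (S (2 * n))%nat. now rewrite !inter_odd.
  - assert (Hodd : forall m, sum_f_R0 (fun k => inter b1 b2 k - inter a1 a2 k) (S (2 * m))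
       = sum_f_R0 (fun k => b1 k - a1 k) m + sum_f_R0 (fun k => b2 k - a2 k) m).
    { induction m as [|m IH].
      - change (S (2*0)) with 1%nat. rewrite tech5. change (sum_f_R0 ?f 0) with (f 0%nat).
        unfold inter; simpl. ring. 
      - replace (S (2 * S m)) with (S (S (S (2 * m)))) by lia.
        rewrite (tech5 _ (S (S (2*m)))), (tech5 _ (S (2*m))), IH, (tech5 _ m), (tech5 _ m).
        replace (S (S (2 * m))) with (2 * S m)%nat by lia.
        replace (S (S (S (2 * m)))) with (S (2 * S m)) by lia.
        rewrite !inter_even, !inter_odd. simpl. ring. }
    intros n.
    eapply Rle_trans. apply (sum_mono _ n (S (2 * n))).
    + intros k. specialize (Hab k). lra.
    + lia.
    + rewrite Hodd. specialize (Hs1 n). specialize (Hs2 n). lra.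
Qed.

Definition lsum (L : list (R * R)) : R := fold_right (fun p s => (snd p - fst p) + s) 0 L.

Lemma lsum_app L1 L2 : lsum (L1 ++ L2) = lsum L1 + lsum L2.
Proof. induction L1 as [|p L1 IH]; simpl. lra. unfold lsum in *; simpl. rewrite IH. lra. Qed.

Lemma lsum_nonneg L : Forall (fun p => fst p <= snd p) L -> 0 <= lsum L.
Proof. induction 1; simpl. lra. unfold lsum in *; simpl. lra. Qed.

Lemma cover_list : forall n (L : list (R*R)), (length L <= n)%nat ->
  Forall (fun p => fst p <= snd p) L ->
  forall x y, x <= y -> (forall z, x <= z <= y -> exists p, In p L /\ fst p < z < snd p) ->
  y - x <= lsum L.
Proof.
  induction n as [|n IH]; intros L Hlen HF x y Hxy Hc.
  - destruct L; [|simpl in Hlen; lia].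
    destruct (Hc x) as [p [[] _]]. lra.
  - destruct (Hc x) as [p [Hp Hpx]]. lra.
    destruct (In_split p L Hp) as [L1 [L2 ->]].
    assert (HF' : Forall (fun p => fst p <= snd p) (L1 ++ L2)).
    { apply Forall_app in HF. destruct HF as [H1 H2]. inversion H2; subst.
      apply Forall_app; auto. }
    assert (Hs : lsum (L1 ++ p :: L2) = (snd p - fst p) + lsum (L1 ++ L2)).
    { rewrite !lsum_app. unfold lsum at 2. simpl. fold (lsum L2). lra. }
    rewrite Hs. pose proof (lsum_nonneg _ HF').
    destruct (Rlt_or_le y (snd p)) as [Hy|Hy]. lra.
    assert (y - snd p <= lsum (L1 ++ L2)).
    { apply (IH (L1 ++ L2)); auto.
      - rewrite length_app in *. simpl in Hlen. lia.
      - intros z Hz. destruct (Hc z) as [q [Hq Hqz]]. lra.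
        exists q. split; auto. apply in_app_or in Hq. apply in_or_app.
        destruct Hq as [Hq|[<-|Hq]]; auto. lra. }
    lra.
Qed.

Lemma lsum_seq (a b : nat -> R) n :
  lsum (map (fun k => (a k, b k)) (seq 0 (S n))) = sum_f_R0 (fun k => b k - a k) n.
Proof.
  induction n as [|n IH]. simpl. unfold lsum; simpl. lra.
  rewrite seq_S, map_app, lsum_app, IH. simpl. unfold lsum; simpl. lra.
Qed.

Lemma compact_cover (a b : nat -> R) c d : c <= d ->
  (forall z, c <= z <= d -> exists k, a k < z < b k) ->
  exists n, forall z, c <= z <= d -> exists k, (k < n)%nat /\ a k < z < b k.
Proof.
  intros Hcd Hcov.
  set (E := fun x => c <= x <= d /\ exists n, forall z, c <= z <= x ->
                     exists k, (k < n)%nat /\ a k < z < b k).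
  assert (Ec : E c).
  { split. lra. destruct (Hcov c) as [k Hk]. lra. exists (S k).
    intros z Hz. exists k. split. lia. replace z with c by lra. auto. }
  assert (Hb : bound E). { exists d. intros x [Hx _]. lra. }
  destruct (completeness E Hb (ex_intro _ c Ec)) as [m [Hub Hlub]].
  assert (Hcm : c <= m) by (apply Hub; auto).
  assert (Hmd : m <= d) by (apply Hlub; intros x [Hx _]; lra).
  destruct (Hcov m) as [j Hj]. lra.
  assert (Hx : exists x, E x /\ a j < x).
  { apply NNPP. intros Hn. assert (m <= a j). apply Hlub. intros x Ex.
    destruct (Rle_or_lt x (a j)); auto. exfalso. apply Hn. exists x. auto. lra. }
  destruct Hx as [x [[Hx1 [n Hn]] Hxa]].
  set (x' := Rmin d ((m + b j) / 2)).
  assert (Ex' : E x').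
  { split. unfold x'. split. apply Rmin_glb; lra. apply Rmin_l.
    exists (max n (S j)). intros z Hz.
    destruct (Rle_or_lt z x) as [Hzx|Hzx].
    - destruct (Hn z) as [k [Hk1 Hk2]]. lra. exists k. split; auto. lia.
    - exists j. split. lia. split. lra.
      assert (x' <= (m + b j)/2) by apply Rmin_r. lra. }
  assert (x' <= m) by (apply Hub; auto).
  unfold x' in *.
  destruct (Rle_or_lt d ((m + b j)/2)) as [Hd|Hd].
  - rewrite Rmin_left in Ex' by lra. destruct Ex' as [_ [n' Hn']]. exists n'. auto.
  - rewrite Rmin_right in H by lra. lra.
Qed.

Lemma interval_not_negligible N a b : a < b -> negligible N ->
  ~ (forall t, a < t < b -> N t).
Proof.
  intros Hab HN Hsub.
  destruct (HN ((b - a) / 4)) as (an & bn & Hle & Hc & Hs). lra.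
  set (c := a + (b - a) / 4). set (d := b - (b - a) / 4).
  destruct (compact_cover an bn c d) as [n Hn].
  - unfold c, d. lra.
  - intros z Hz. apply Hc. apply Hsub. unfold c, d in Hz. lra.
  - destruct n as [|n].
    + destruct (Hn c) as [k [Hk _]]. unfold c, d; lra. lia.
    + assert (d - c <= lsum (map (fun k => (an k, bn k)) (seq 0 (S n)))).
      { apply (cover_list (length (map (fun k => (an k, bn k)) (seq 0 (S n))))); auto.
        - rewrite Forall_forall. intros p Hp. apply in_map_iff in Hp.
          destruct Hp as [k [<- _]]. simpl. apply Hle.
        - unfold c, d. lra.
        - intros z Hz. destruct (Hn z Hz) as [k [Hk Hkz]].
          exists (an k, bn k). split; auto. apply (in_map (fun k => (an k, bn k))). apply in_seq. lia. }
      rewrite lsum_seq in H. specialize (Hs n). unfold c, d in H. lra.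
Qed.
Definition iso (g : R -> R) x := 0 <= x /\ g x = 0 /\
  exists d, 0 < d /\ forall y, g y = 0 -> Rabs (y - x) <= d -> y = x.

Definition Piso (g : R -> R) (N m : nat) x := 0 <= x /\ g x = 0 /\
  Rabs (x - INR m / INR N) <= 1 / INR N /\
  forall y, g y = 0 -> Rabs (y - x) <= 2 / INR N -> y = x.

Definition hiso (g : R -> R) (N m : nat) : R :=
  match excluded_middle_informative (exists x, Piso g N m x) with
  | left H => proj1_sig (constructive_indefinite_description _ H)
  | right _ => 0 end.

Lemma iso_countable g : countable (iso g).
Proof.
  exists (fun n => let (N, m) := Cantor.of_nat n in hiso g N m).
  intros x (Hx0 & Hgx & d & Hd & Hiso).
  destruct (archimed_cor1 (d/2)) as [N [HN HN0]]. lra.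
  assert (HNp : 0 < INR N) by (apply lt_0_INR; lia).
  destruct (archimed (x * INR N)) as [Hu1 Hu2].
  assert (Hup : (0 < up (x * INR N))%Z).
  { apply lt_IZR. assert (0 <= x * INR N) by nra. lra. }
  set (m := Z.to_nat (up (x * INR N))).
  assert (Hm : INR m = IZR (up (x * INR N))).
  { unfold m. rewrite INR_IZR_INZ, Z2Nat.id; auto. lia. }
  assert (HP : Piso g N m x).
  { repeat split; auto.
    - rewrite Hm. rewrite Rabs_left1.
      + apply (Rmult_le_reg_r (INR N)); auto. field_simplify; try lra.
      + apply (Rmult_le_reg_r (INR N)); auto. field_simplify; lra.
    - intros y Hy Hyx. apply Hiso; auto. unfold Rdiv in *.
      assert (/ INR N * INR N = 1) by (field; lra). lra. }
  exists (Cantor.to_nat (N, m)). rewrite Cantor.cancel_of_to.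
  unfold hiso. destruct excluded_middle_informative as [H|H].
  - destruct (constructive_indefinite_description _ H) as [x' Hx']. simpl.
    destruct Hx' as (_ & _ & Hx'1 & Hx'2). destruct HP as (_ & _ & HP1 & _).
    apply Hx'2; auto.
    replace (x - x') with ((x - INR m / INR N) - (x' - INR m / INR N)) by ring.
    eapply Rle_trans. apply Rabs_triang. rewrite Rabs_Ropp. lra.
  - exfalso. apply H. exists x. auto.
Qed.

Lemma deriv_iso g x l : 0 <= x -> g x = 0 -> derivable_pt_lim g x l -> l <> 0 -> iso g x.
Proof.
  intros Hx Hg Hd Hl. repeat split; auto.
  destruct (Hd (Rabs l / 2)) as [delta Hdelta].
  { assert (0 < Rabs l) by (apply Rabs_pos_lt; auto). lra. }
  exists (delta / 2). split. destruct delta; simpl; lra.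
  intros y Hy Hyx. apply NNPP. intros Hne.
  specialize (Hdelta (y - x)). replace (x + (y - x)) with y in Hdelta by ring.
  rewrite Hy, Hg in Hdelta.
  assert (Hne' : y - x <> 0) by lra.
  assert (Rabs (y - x) < delta) by (destruct delta; simpl in *; lra).
  specialize (Hdelta Hne' H).
  replace ((0 - 0) / (y - x) - l) with (- l) in Hdelta by (field; auto).
  rewrite Rabs_Ropp in Hdelta. assert (0 < Rabs l) by (apply Rabs_pos_lt; auto). lra.
Qed.
From Coquelicot Require Import Coquelicot.

Ltac dsolve l th t H1 H2 dl dth :=
  apply is_derive_Reals in H1; apply is_derive_Reals in H2;
  apply is_derive_Reals; auto_derive;
  [ split; [exists dl; auto|split; [exists dth; auto| auto]]
  | replace (Derive (fun x : R => l x) t) with dl by (symmetry; apply is_derive_unique; exact H1);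
    replace (Derive (fun x : R => th x) t) with dth by (symmetry; apply is_derive_unique; exact H2); ring ].

Lemma d_sin (l th : R -> R) t dl dth : derivable_pt_lim l t dl -> derivable_pt_lim th t dth ->
  derivable_pt_lim (fun s => l s * sin (th s)) t (dl * sin (th t) + l t * (cos (th t) * dth)).
Proof. intros H1 H2. dsolve l th t H1 H2 dl dth. Qed.

Lemma d_cos (l th : R -> R) A B t dl dth : derivable_pt_lim l t dl -> derivable_pt_lim th t dth ->
  derivable_pt_lim (fun s => l s * (A + B * cos (th s))) t
    (dl * (A + B * cos (th t)) - l t * (B * sin (th t) * dth)).
Proof. intros H1 H2. dsolve l th t H1 H2 dl dth. Qed.

Lemma d_Z (l th : R -> R) t dl dth : derivable_pt_lim l t dl -> derivable_pt_lim th t dth ->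
  derivable_pt_lim (fun s => l s * Z_i (th s)) t
    (dl * Z_i (th t) + l t * (sin (th t) * dth)).
Proof. intros H1 H2. unfold Z_i. dsolve l th t H1 H2 dl dth. Qed.

Lemma d_plus (f g : R -> R) t a b : derivable_pt_lim f t a -> derivable_pt_lim g t b ->
  derivable_pt_lim (fun s => f s + g s) t (a + b).
Proof. intros H1 H2. exact (derivable_pt_lim_plus f g t a b H1 H2). Qed.

Lemma d_scal (f : R -> R) c t a : derivable_pt_lim f t a ->
  derivable_pt_lim (fun s => c * f s) t (c * a).
Proof. intros H. exact (derivable_pt_lim_scal f c t a H). Qed.

Lemma cos_pm1 x : sin x = 0 -> cos x = 1 \/ cos x = -1.
Proof.
  intros H. pose proof (sin2_cos2 x) as E. unfold Rsqr in E. rewrite H in E.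
  assert ((cos x - 1) * (cos x + 1) = 0) by nra.
  apply Rmult_integral in H0. destruct H0; [left|right]; lra.
Qed.

Lemma alg_contra l1 l2 th1 th2 u I1 I2 : I1 <> I2 -> (l1, l2) <> (0, 0) ->
  l1 * Z_i th1 + l2 * Z_i th2 = 0 -> l1 * sin th1 = 0 -> l2 * sin th2 = 0 ->
  l1 * (beta I1 + alpha I1 * cos th1) - u * (l1 * Z_i th1) = 0 ->
  l2 * (beta I2 + alpha I2 * cos th2) - u * (l2 * Z_i th2) = 0 -> False.
Proof.
  unfold Z_i, alpha, beta. intros HI Hnz Hx Hs1 Hs2 E1 E2.
  destruct (Req_dec l1 0) as [Hl1|Hl1].
  - subst l1. assert (Hl2 : l2 <> 0) by (intros ->; apply Hnz; auto).
    apply Rmult_integral in Hs2. destruct Hs2 as [|Hs2]; [contradiction|].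
    destruct (cos_pm1 _ Hs2) as [C|C]; rewrite C in *.
    + apply Hl2. nra.
    + apply Hl2. nra.
  - apply Rmult_integral in Hs1. destruct Hs1 as [|Hs1]; [contradiction|].
    destruct (cos_pm1 _ Hs1) as [C|C]; rewrite C in *.
    + apply Hl1. nra.
    + assert (Hu : u = - I1).
      { apply (Rmult_eq_reg_l (-2 * l1)). nra. intro. apply Hl1. lra. }
      subst u.
      assert (Hl2 : l2 <> 0) by (intros ->; apply Hl1; lra).
      apply Rmult_integral in Hs2. destruct Hs2 as [|Hs2]; [contradiction|].
      destruct (cos_pm1 _ Hs2) as [C2|C2]; rewrite C2 in *.
      * apply Hl1. nra.
      * apply HI. apply (Rmult_eq_reg_l (2 * l2)). nra. intro. apply Hl2. lra.
Qed.

Section Key.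
Variables (I1 I2 : R) (th1 th2 l1 l2 u : R -> R).
Definition phiF s := switching (l1 s) (l2 s) (th1 s) (th2 s).
Definition P1F s := l1 s * sin (th1 s).
Definition P2F s := l2 s * sin (th2 s).
Definition psiF s := l1 s * sin (th1 s) + l2 s * sin (th2 s).
Definition GF s := l1 s * (beta I1 + alpha I1 * cos (th1 s)) + l2 s * (beta I2 + alpha I2 * cos (th2 s)).
Definition Bad t := iso phiF t \/ iso psiF t \/ iso GF t \/ iso P1F t \/ iso P2F t.

Lemma Bad_countable : countable Bad.
Proof.
  unfold Bad. repeat apply countable_union; apply iso_countable.
Qed.

Lemma key t : I1 <> I2 -> 0 <= t -> (l1 t, l2 t) <> (0, 0) ->
  derivable_pt_lim th1 t (f_i I1 (th1 t) + Z_i (th1 t) * u t) ->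
  derivable_pt_lim th2 t (f_i I2 (th2 t) + Z_i (th2 t) * u t) ->
  derivable_pt_lim l1 t (- dHam_dth I1 (l1 t) (th1 t) (u t)) ->
  derivable_pt_lim l2 t (- dHam_dth I2 (l2 t) (th2 t) (u t)) ->
  phiF t = 0 -> Bad t.
Proof.
  intros HI Ht Hnz Dth1 Dth2 Dl1 Dl2 Hphi.
  pose proof (sin2_cos2 (th1 t)) as T1. pose proof (sin2_cos2 (th2 t)) as T2.
  unfold Rsqr in T1, T2.
  pose proof (d_sin _ _ _ _ _ Dl1 Dth1) as DP1.
  pose proof (d_sin _ _ _ _ _ Dl2 Dth2) as DP2.
  assert (Hphid := d_plus _ _ _ _ _ (d_Z _ _ _ _ _ Dl1 Dth1) (d_Z _ _ _ _ _ Dl2 Dth2)).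
  assert (Hpsid := d_plus _ _ _ _ _ DP1 DP2).
  assert (HGd := d_plus _ _ _ _ _ (d_cos _ _ (beta I1) (alpha I1) _ _ _ Dl1 Dth1)
                                  (d_cos _ _ (beta I2) (alpha I2) _ _ _ Dl2 Dth2)).
  unfold phiF, switching in *.
  match type of Hphid with derivable_pt_lim _ _ ?v =>
    replace v with (2 * psiF t) in Hphid by (unfold psiF, f_i, Z_i, dHam_dth, alpha, beta; ring) end.
  match type of Hpsid with derivable_pt_lim _ _ ?v =>
    replace v with (GF t - u t * (l1 t * Z_i (th1 t) + l2 t * Z_i (th2 t))) in Hpsid
    by (assert (K1 : l1 t * (beta I1 - u t) * (sin (th1 t) * sin (th1 t) + cos (th1 t) * cos (th1 t) - 1) = 0) by (rewrite T1; ring);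
        assert (K2 : l2 t * (beta I2 - u t) * (sin (th2 t) * sin (th2 t) + cos (th2 t) * cos (th2 t) - 1) = 0) by (rewrite T2; ring);
        unfold GF, f_i, Z_i, dHam_dth, alpha, beta in *; lra) end.
  match type of HGd with derivable_pt_lim _ _ ?v =>
    replace v with (-4 * (I1 * P1F t + I2 * P2F t) - 2 * u t * psiF t) in HGd
    by (unfold P1F, P2F, psiF, f_i, Z_i, dHam_dth, alpha, beta; ring) end.
  match type of DP1 with derivable_pt_lim _ _ ?v =>
    replace v with (l1 t * (beta I1 + alpha I1 * cos (th1 t)) - u t * (l1 t * Z_i (th1 t))) in DP1
    by (assert (K1 : l1 t * (beta I1 - u t) * (sin (th1 t) * sin (th1 t) + cos (th1 t) * cos (th1 t) - 1) = 0) by (rewrite T1; ring);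
        unfold f_i, Z_i, dHam_dth, alpha, beta in *; lra) end.
  match type of DP2 with derivable_pt_lim _ _ ?v =>
    replace v with (l2 t * (beta I2 + alpha I2 * cos (th2 t)) - u t * (l2 t * Z_i (th2 t))) in DP2
    by (assert (K1 : l2 t * (beta I2 - u t) * (sin (th2 t) * sin (th2 t) + cos (th2 t) * cos (th2 t) - 1) = 0) by (rewrite T2; ring);
        unfold f_i, Z_i, dHam_dth, alpha, beta in *; lra) end.
  destruct (Req_dec (psiF t) 0) as [Hpsi|Hpsi].
  2:{ left. apply (deriv_iso _ _ _ Ht Hphi Hphid). lra. }
  rewrite Hphi, Rmult_0_r, Rminus_0_r in Hpsid.
  destruct (Req_dec (GF t) 0) as [HG|HG].
  2:{ right; left. apply (deriv_iso _ _ _ Ht Hpsi Hpsid). exact HG. }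
  rewrite Hpsi in HGd.
  destruct (Req_dec (I1 * P1F t + I2 * P2F t) 0) as [HK|HK].
  2:{ right; right; left. apply (deriv_iso _ _ _ Ht HG HGd). intro E; apply HK. lra. }
  assert (Hps : psiF t = P1F t + P2F t) by reflexivity.
  assert (E : (I1 - I2) * P1F t = (I1 * P1F t + I2 * P2F t) - I2 * (P1F t + P2F t)) by ring.
  rewrite HK, <- Hps, Hpsi in E.
  assert (HP1 : P1F t = 0).
  { assert (H : (I1 - I2) * P1F t = 0) by lra.
    apply Rmult_integral in H. destruct H as [H|H]; auto. exfalso; apply HI; lra. }
  assert (HP2 : P2F t = 0) by lra.
  destruct (Req_dec (l1 t * (beta I1 + alpha I1 * cos (th1 t)) - u t * (l1 t * Z_i (th1 t))) 0) as [H1|H1].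
  2:{ right; right; right; left. exact (deriv_iso _ _ _ Ht HP1 DP1 H1). }
  destruct (Req_dec (l2 t * (beta I2 + alpha I2 * cos (th2 t)) - u t * (l2 t * Z_i (th2 t))) 0) as [H2|H2].
  2:{ right; right; right; right. exact (deriv_iso _ _ _ Ht HP2 DP2 H2). }
  exfalso. exact (alg_contra _ _ _ _ _ _ _ HI Hnz Hphi HP1 HP2 H1 H2).
Qed.
End Key.

Theorem mainTheorem4
  (I1 I2 M : R) (m1 m2 : nat) (T : R)
  (th1 th2 l1 l2 u : R -> R) (lam0 : R)
  (hI1 : 0 < I1) (hI2 : 0 < I2) (hI12 : I1 <> I2) (hM : 0 < M)
  (hm1 : (0 < m1)%nat) (hm2 : (0 < m2)%nat) (hT : 0 < T)
  (* admissible control *)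
  (hu : forall t, 0 <= t <= T -> Rabs (u t) <= M)
  (* trajectory: absolutely continuous Caratheodory solution *)
  (hac1 : abs_cont_on T th1) (hac2 : abs_cont_on T th2)
  (hode : ae_on T (fun t =>
      derivable_pt_lim th1 t (f_i I1 (th1 t) + Z_i (th1 t) * u t) /\
      derivable_pt_lim th2 t (f_i I2 (th2 t) + Z_i (th2 t) * u t)))
  (h0 : th1 0 = 0 /\ th2 0 = 0)
  (hTend : th1 T = 2 * INR m1 * PI /\ th2 T = 2 * INR m2 * PI)
  (* Pontryagin extremal: multipliers *)
  (hlam0 : 0 <= lam0)
  (hlnz : forall t, 0 <= t <= T -> (l1 t, l2 t) <> (0, 0))
  (hacl1 : abs_cont_on T l1) (hacl2 : abs_cont_on T l2)
  (hadj : ae_on T (fun t =>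
      derivable_pt_lim l1 t (- dHam_dth I1 (l1 t) (th1 t) (u t)) /\
      derivable_pt_lim l2 t (- dHam_dth I2 (l2 t) (th2 t) (u t))))
  (hmin : ae_on T (fun t => forall v, Rabs v <= M ->
      Ham I1 I2 lam0 (l1 t) (l2 t) (th1 t) (th2 t) (u t)
      <= Ham I1 I2 lam0 (l1 t) (l2 t) (th1 t) (th2 t) v))
  (hH0 : ae_on T (fun t =>
      Ham I1 I2 lam0 (l1 t) (l2 t) (th1 t) (th2 t) (u t) = 0)) :
  (forall a b, 0 <= a -> a < b -> b <= T ->
     exists t, a < t < b /\ switching (l1 t) (l2 t) (th1 t) (th2 t) <> 0)
  /\
  ae_on T (fun t =>
     (switching (l1 t) (l2 t) (th1 t) (th2 t) < 0 -> u t = M) /\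
     (switching (l1 t) (l2 t) (th1 t) (th2 t) > 0 -> u t = - M) /\
     (u t = M \/ u t = - M)).
Proof.
  destruct hode as [N1 [HN1 Hode]]. destruct hadj as [N2 [HN2 Hadj]].
  destruct hmin as [N3 [HN3 Hmin]].
  set (Nall := fun t => N1 t \/ N2 t \/ N3 t \/ Bad I1 I2 th1 th2 l1 l2 t).
  assert (HNall : negligible Nall).
  { unfold Nall. apply negligible_union; auto. apply negligible_union; auto.
    apply negligible_union; auto. apply countable_negligible. apply Bad_countable. }
  assert (Hgood : forall t, 0 <= t <= T -> ~ Nall t ->
            switching (l1 t) (l2 t) (th1 t) (th2 t) <> 0).
  { intros t Ht HnN H0. apply HnN. right; right; right.
    assert (~ N1 t) by (intro; apply HnN; left; auto).
    assert (~ N2 t) by (intro; apply HnN; right; left; auto).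
    destruct (Hode t Ht H) as [D1 D2]. destruct (Hadj t Ht H1) as [D3 D4].
    apply (key I1 I2 th1 th2 l1 l2 u t); auto. lra. }
  split.
  - intros a b Ha Hab Hb. apply NNPP. intros Hn.
    apply (interval_not_negligible Nall a b Hab HNall).
    intros t Ht. apply NNPP. intros HnN.
    apply (Hgood t); [lra|auto|]. apply NNPP. intros Hs. apply Hn. exists t. auto.
  - exists Nall. split; auto. intros t Ht HnN.
    assert (~ N3 t) by (intro; apply HnN; right; right; left; auto).
    pose proof (Hgood t Ht HnN) as Hs.
    assert (HM1 : Rabs M <= M) by (rewrite Rabs_pos_eq; lra).
    assert (HM2 : Rabs (- M) <= M) by (rewrite Rabs_Ropp, Rabs_pos_eq; lra).
    pose proof (Hmin t Ht H M HM1) as Hm1. pose proof (Hmin t Ht H (- M) HM2) as Hm2.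
    pose proof (hu t Ht) as Hut. apply Rabs_le_between in Hut.
    set (s := switching (l1 t) (l2 t) (th1 t) (th2 t)) in *.
    assert (E : forall v, Ham I1 I2 lam0 (l1 t) (l2 t) (th1 t) (th2 t) v -
                Ham I1 I2 lam0 (l1 t) (l2 t) (th1 t) (th2 t) (u t) = s * (v - u t)).
    { intros v. unfold s, Ham, switching. ring. }
    pose proof (E M) as E1. pose proof (E (- M)) as E2.
    assert (A1 : 0 <= s * (M - u t)) by lra.
    assert (A2 : 0 <= s * (- M - u t)) by lra.
    assert (C1 : s < 0 -> u t = M) by (intro; nra).
    assert (C2 : s > 0 -> u t = - M) by (intro; nra).
    split; auto. split; auto.
    destruct (Rlt_or_le s 0) as [Hl|Hl]. left; auto. right; apply C2. lra.
Qed.
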